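(* If $(\Phi,D)$ is a labeled continuous information algebra, then its associated domain-free information algebra $(\Phi/\sigma,D)$ is a domain-free continuous information algebra.
   Context: A labeled information algebra $(\Phi,D)$ consists of a lattice $D$, a set $\Phi$ with labeling $d:\Phi\to D$, combination $\otimes$ and marginalization $\phi^{\downarrow x}$ for $x\le d(\phi)$, such that: $\otimes$ is associative and commutative; for each $s\in D$ there is $e_s$ with $d(e_s)=s$ and $e_s\otimes\phi=\phi$ whenever $d(\phi)=s$; $d(\phi\otimes\psi)=d(\phi)\vee d(\psi)$; $d(\phi^{\downarrow x})=x$; $(\phi^{\downarrow y})^{\downarrow x}=\phi^{\downarrow x}$ for $x\le y\le d(\phi)$; $(\phi\otimes\psi)^{\downarrow x}=\phi\otimes\psi^{\downarrow x\wedge y}$ when $d(\phi)=x$, $d(\psi)=y$; $e_y^{\downarrow x}=e_x$ for $x\le y$; $\phi\otimes\phi^{\downarrow x}=\phi$. In any (labeled or domain-free) information algebra, $\psi\le\phi$ iff $\psi\otimes\phi=\phi$; suprema refer to this order; $a\ll b$ means: for every directed $X$ with $b\le\vee X$ there is $c\in X$ with $a\le c$. $\Phi_x=\{\phi:d(\phi)=x\}$ and $\ll_x$ is the way-below relation in $(\Phi_x,\le)$. $(\Phi,D)$ is labeled continuous if $D$ has a top element and there are sets $\Gamma_x\subseteq\Phi_x$ ($x\in D$), closed under combination and containing $e_x$, such that every directed $X\subseteq\Gamma_x$ has a supremum $\vee X\in\Phi_x$, and $\phi=\vee\{\psi\in\Gamma_x:\psi\ll_x\phi\}$ for all $\phi\in\Phi_x$.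 The associated domain-free algebra: for $y\ge d(\phi)$ let $\phi^{\uparrow y}=\phi\otimes e_y$; define $\phi\equiv\psi\pmod\sigma$ iff $\phi^{\uparrow d(\phi)\vee d(\psi)}=\psi^{\uparrow d(\phi)\vee d(\psi)}$; on $\Phi/\sigma$ set $[\phi]_\sigma\otimes[\psi]_\sigma=[\phi\otimes\psi]_\sigma$ and $[\phi]_\sigma^{\Rightarrow x}=[(\phi^{\uparrow x\vee d(\phi)})^{\downarrow x}]_\sigma$. A domain-free information algebra (a set with associative commutative combination with neutral element $e$ and focusing $\Rightarrow$ satisfying transitivity, combination, support and idempotency axioms) $(\Phi',D)$, with $D$ having a top element, is continuous if there exists $\Gamma\subseteq\Phi'$, closed under combination and containing $e$, such that every directed subset of $\Gamma$ has a supremum in $\Phi'$ and $\phi=\vee\{\psi\in\Gamma:\psi\ll\phi\}$ for all $\phi\in\Phi'$. *)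

(* Defs.v *)
From HB Require Import structures.
From mathcomp Require Import all_boot all_order.
From Stdlib Require Import ClassicalEpsilon.
Unset Implicit Arguments.
Import Order.Theory.
Local Open Scope order_scope.

Section OrderNotions.
Variables (T : Type) (P : T -> Prop) (le : T -> T -> Prop).

Definition directed (X : T -> Prop) : Prop :=
  (exists a, X a) /\
  (forall a b, X a -> X b -> exists c, X c /\ le a c /\ le b c).

Definition is_sup_in (X : T -> Prop) (s : T) : Prop :=
  P s /\ (forall a, X a -> le a s) /\
  (forall u, P u -> (forall a, X a -> le a u) -> le s u).

Definition way_below_in (a b : T) : Prop :=
  forall X : T -> Prop, (forall c, X c -> P c) -> directed X ->
  forall s, is_sup_in X s -> le b s -> exists c, X c /\ le a c.
End OrderNotions.

(* [d] labeling, [comb] combination, [marg phi x] marginalization      *)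
(* (only meaningful for x <= d phi; a total function), [e s] neutral   *)
(* element of domain s.                                                *)
Section Labeled.
Variables (disp : Order.disp_t) (D : latticeType disp) (Phi : Type)
  (d : Phi -> D) (comb : Phi -> Phi -> Phi) (marg : Phi -> D -> Phi)
  (e : D -> Phi).

Definition labeled_info_algebra : Prop :=
  (forall a b c, comb a (comb b c) = comb (comb a b) c) /\
  (forall a b, comb a b = comb b a) /\
  (forall s, d (e s) = s) /\
  (forall phi, comb (e (d phi)) phi = phi) /\
  (forall a b, d (comb a b) = d a `|` d b) /\
  (forall phi x, x <= d phi -> d (marg phi x) = x) /\
  (forall phi x y, x <= y -> y <= d phi -> marg (marg phi y) x = marg phi x) /\
  (forall phi psi x y, d phi = x -> d psi = y ->
      marg (comb phi psi) x = comb phi (marg psi (x `&` y))) /\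
  (forall x y, x <= y -> marg (e y) x = e x) /\
  (forall phi x, x <= d phi -> comb phi (marg phi x) = phi).

Definition info_le (psi phi : Phi) : Prop := comb psi phi = phi.

Definition Phi_at (x : D) : Phi -> Prop := fun phi => d phi = x.

Definition labeled_continuous : Prop :=
  (exists top : D, forall x, x <= top) /\
  exists Gamma : D -> Phi -> Prop,
    (forall x psi, Gamma x psi -> Phi_at x psi) /\
    (forall x a b, Gamma x a -> Gamma x b -> Gamma x (comb a b)) /\
    (forall x, Gamma x (e x)) /\
    (forall x (X : Phi -> Prop), (forall a, X a -> Gamma x a) ->
        directed Phi info_le X -> exists s, is_sup_in Phi (Phi_at x) info_le X s) /\
    (forall x phi, Phi_at x phi ->
        is_sup_in Phi (Phi_at x) info_le
          (fun psi => Gamma x psi /\ way_below_in Phi (Phi_at x) info_le psi phi)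
          phi).

Definition vacuous_ext (phi : Phi) (y : D) : Phi := comb phi (e y).

Definition sigma (phi psi : Phi) : Prop :=
  vacuous_ext phi (d phi `|` d psi) = vacuous_ext psi (d phi `|` d psi).

Definition cls (phi : Phi) : Phi -> Prop := fun psi => sigma phi psi.

Definition quot : Type := { S : Phi -> Prop | exists phi, S = cls phi }.

Definition qcls (phi : Phi) : quot := exist _ (cls phi) (ex_intro _ phi erefl).

Definition repr (A : quot) : Phi :=
  proj1_sig (constructive_indefinite_description _ (proj2_sig A)).

Definition qcomb (A B : quot) : quot := qcls (comb (repr A) (repr B)).

Definition qfocus (A : quot) (x : D) : quot :=
  let phi := repr A in qcls (marg (vacuous_ext phi (x `|` d phi)) x).

Definition qneutral (top : D) : quot := qcls (e top).
End Labeled.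

Section DomainFree.
Variables (disp : Order.disp_t) (D : latticeType disp) (Psi : Type)
  (comb : Psi -> Psi -> Psi) (e : Psi) (focus : Psi -> D -> Psi).

Definition df_info_algebra : Prop :=
  (forall a b c, comb a (comb b c) = comb (comb a b) c) /\
  (forall a b, comb a b = comb b a) /\
  (forall a, comb e a = a) /\
  (forall phi x y, focus (focus phi x) y = focus phi (x `&` y)) /\
  (forall phi psi x, focus (comb (focus phi x) psi) x =
                     comb (focus phi x) (focus psi x)) /\
  (forall phi, exists x, focus phi x = phi) /\
  (forall phi x, comb phi (focus phi x) = phi).

Definition df_le (psi phi : Psi) : Prop := comb psi phi = phi.

Definition all_Psi : Psi -> Prop := fun _ => True.

Definition df_continuous : Prop :=
  (exists top : D, forall x, x <= top) /\
  exists Gamma : Psi -> Prop,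
    (forall a b, Gamma a -> Gamma b -> Gamma (comb a b)) /\
    Gamma e /\
    (forall X : Psi -> Prop, (forall a, X a -> Gamma a) ->
        directed Psi df_le X -> exists s, is_sup_in Psi all_Psi df_le X s) /\
    (forall phi, is_sup_in Psi all_Psi df_le
        (fun psi => Gamma psi /\ way_below_in Psi all_Psi df_le psi phi) phi).
End DomainFree.

(* Main.v *)
Require Import Defs.
From mathcomp Require Import all_boot all_order.
From Stdlib Require Import ClassicalEpsilon FunctionalExtensionality PropExtensionality ProofIrrelevance.
Import Order.Theory.
Local Open Scope order_scope.

Theorem theorem4p10 (disp : Order.disp_t) (D : latticeType disp) (Phi : Type)
  (d : Phi -> D) (comb : Phi -> Phi -> Phi) (marg : Phi -> D -> Phi)
  (e : D -> Phi) :
  labeled_info_algebra disp D Phi d comb marg e ->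
  labeled_continuous disp D Phi d comb e ->
  forall top : D, (forall x : D, x <= top) ->
    df_info_algebra disp D (quot disp D Phi d comb e)
      (qcomb disp D Phi d comb e) (qneutral disp D Phi d comb e top)
      (qfocus disp D Phi d comb marg e) /\
    df_continuous disp D (quot disp D Phi d comb e)
      (qcomb disp D Phi d comb e) (qneutral disp D Phi d comb e top).
Proof.
move=> H HC top Htop.
case: H => cA [cC [de [en [dc [dm [mm [mc [me mi]]]]]]]].
pose N := fun a => comb a (e top).
have etop : comb (e top) (e top) = e top.
  by have := en (e top); rewrite de.
have eue : forall u w, u <= w -> comb (e u) (e w) = e w.
  move=> u w huw; have := mi (e w) u; rewrite de => /(_ huw).
  by rewrite me // cC.
have L : forall phi u w, d phi <= u -> u <= w ->
    marg (comb phi (e w)) u = comb phi (e u).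
  move=> phi u w hu huw.
  rewrite -(eue u w) // cA.
  have hd : d (comb phi (e u)) = u by rewrite dc de join_r.
  rewrite (mc _ _ u w hd (de w)) meet_l // me //.
  by rewrite -cA (_ : comb (e u) (e u) = e u) //; have := en (e u); rewrite de.
have mself : forall phi, marg phi (d phi) = phi.
  move=> phi.
  have h1 : comb phi (e (d phi)) = phi by rewrite cC en.
  have := mc phi (e (d phi)) (d phi) (d phi) erefl (de _).
  by rewrite meetxx me // !h1.
have dN : forall a, d (N a) = top by move=> a; rewrite /N dc de join_r.
have Nid : forall t, d t = top -> N t = t.
  by move=> t Ht; rewrite /N cC -{1}Ht en.
have Ncomb : forall a b, N (comb a b) = comb (N a) (N b).
  move=> a b; rewrite /N -!cA; congr comb.
  by rewrite [comb (e top) _]cC -cA etop.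
have sigE : forall a b, Defs.sigma disp D Phi d comb e a b <-> N a = N b.
  move=> a b; rewrite /sigma /vacuous_ext; split.
  - move=> h; rewrite /N -(eue (d a `|` d b) top) // !cA h //.
  - move=> h; rewrite -(L a _ top) ?leUl // -(L b _ top) ?leUr //.
    by rewrite -/(N a) -/(N b) h.
pose n := fun A => N (Defs.repr disp D Phi d comb e A).
have rspec : forall A : quot disp D Phi d comb e,
    proj1_sig A = Defs.cls disp D Phi d comb e (Defs.repr disp D Phi d comb e A).
  move=> A; rewrite /Defs.repr.
  by case: (constructive_indefinite_description _ _).
have nq : forall a, n (qcls disp D Phi d comb e a) = N a.
  move=> a; have h := rspec (qcls disp D Phi d comb e a).
  have h2 := equal_f h (Defs.repr disp D Phi d comb e (qcls disp D Phi d comb e a)).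
  rewrite /= /cls in h2; apply/esym; apply/sigE; rewrite h2.
  by [].
have qext : forall A B, n A = n B -> A = B.
  move=> A B h; apply: eq_sig_hprop; first by move=> *; apply: proof_irrelevance.
  rewrite !rspec; apply: functional_extensionality => x.
  apply: propositional_extensionality; rewrite /cls !sigE.
  by rewrite -/(n A) -/(n B) h.
have nq_top : forall t, d t = top -> n (qcls disp D Phi d comb e t) = t.
  by move=> t Ht; rewrite nq Nid.
have dn : forall A, d (n A) = top by move=> A; apply: dN.
have n_comb : forall A B, n (qcomb disp D Phi d comb e A B) = comb (n A) (n B).
  by move=> A B; rewrite /qcomb nq Ncomb.
have n_neu : n (qneutral disp D Phi d comb e top) = e top.
  by rewrite /qneutral nq /N etop.
have n_foc : forall A x, n (qfocus disp D Phi d comb marg e A x) = N (marg (n A) x).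
  move=> A x; rewrite /qfocus nq /vacuous_ext; congr N.
  set r := Defs.repr disp D Phi d comb e A.
  have h2 : x `|` d r <= d (comb r (e top)) by rewrite dc de (join_r (Htop _)) Htop.
  rewrite /n -/r /N -(mm (comb r (e top)) x (x `|` d r) (leUl _ _) h2).
  by rewrite (L _ _ _ (leUr _ _) (Htop _)).
have leE : forall A B, df_le _ (qcomb disp D Phi d comb e) A B <-> info_le Phi comb (n A) (n B).
  move=> A B; rewrite /df_le /info_le; split.
  - by move=> h; rewrite -n_comb h.
  - by move=> h; apply: qext; rewrite n_comb.
have tt : forall t, comb t t = t.
  by move=> t; have := mi t (d t) (lexx _); rewrite mself.
split.
  split; first by move=> a b c; apply: qext; rewrite !n_comb cA.
  split; first by move=> a b; apply: qext; rewrite !n_comb cC.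
  split; first by move=> a; apply: qext; rewrite n_comb n_neu -(dn a) en.
  split.
    move=> A x y; apply: qext; rewrite !n_foc.
    set t := n A; have Ht : d t = top := dn A.
    set psi := marg t x.
    have dpsi : d psi = x by rewrite /psi dm // Ht.
    have dNpsi : d (N psi) = top := dN psi.
    rewrite -(mm (N psi) y (x `|` y)) ?leUr ?dNpsi //.
    rewrite /N L ?dpsi ?leUl //.
    have -> : comb psi (e (x `|` y)) = comb (e y) psi.
      rewrite -(eue y (x `|` y)) ?leUr // cA [comb psi _]cC.
      have hd : d (comb (e y) psi) = x `|` y by rewrite dc de dpsi joinC.
      by rewrite -hd cC en.
    rewrite (mc (e y) psi y x (de y) dpsi) /psi mm ?leIr ?Ht //.
    by rewrite -cA [comb _ (e top)]cC cA eue // meetC.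
  split.
    move=> A B x; apply: qext; rewrite !n_foc !n_comb !n_foc.
    set t := n A; set s := n B; have Hs : d s = top := dn B.
    set psi := marg t x.
    have dpsi : d psi = x by rewrite /psi dm // dn.
    have -> : comb (N psi) s = comb psi s.
      by rewrite /N -cA -{1}Hs en.
    by rewrite (mc psi s x top dpsi Hs) meet_l // Ncomb.
  split.
    move=> A; exists top; apply: qext; rewrite n_foc -{1}(dn A) mself; exact: Nid (dn A).
  move=> A x; apply: qext; rewrite n_comb n_foc /N cA mi ?dn //.
  exact: Nid (dn A).
case: HC => _ [G [GP [Gc [Ge [Gsup Gwb]]]]].
have dirY : forall X : quot disp D Phi d comb e -> Prop,
    directed _ (df_le _ (qcomb disp D Phi d comb e)) X ->
    directed Phi (info_le Phi comb) (fun t => exists A, X A /\ t = n A).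
  move=> X [[a Xa] hdir]; split; first by exists (n a); exists a.
  move=> _ _ [A1 [X1 ->]] [A2 [X2 ->]].
  have [C [XC [l1 l2]]] := hdir A1 A2 X1 X2.
  by exists (n C); split; [exists C | split; apply/leE].
split; first by exists top.
exists (fun A => G top (n A)).
split; first by move=> a b ga gb; rewrite n_comb; apply: Gc.
split; first by rewrite n_neu.
split.
  move=> X HX HD.
  have HY : forall a, (exists A, X A /\ a = n A) -> G top a.
    by move=> _ [A [XA ->]]; exact: HX.
  have [s [Ps [ub lub]]] := Gsup top _ HY (dirY X HD).
  exists (qcls disp D Phi d comb e s); split; first by [].
  split.
    by move=> A XA; apply/leE; rewrite nq_top //; apply: ub; exists A.
  move=> U _ hU; apply/leE; rewrite nq_top //; apply: lub; first exact: dn.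
  by move=> _ [A [XA ->]]; apply/leE; apply: hU.
move=> A; set t := n A.
have Ht : d t = top := dn A.
have [_ [ub lub]] := Gwb top t Ht.
split; first by [].
split.
  move=> B [_ wbB].
  have AA : df_le _ (qcomb disp D Phi d comb e) A A.
    by apply/leE; apply: tt.
  have [c [-> lc]] := wbB (fun C => C = A) (fun _ _ => I)
    (conj (ex_intro _ A erefl)
      (fun a b ha hb => ex_intro _ A (conj erefl
         (conj (eq_ind_r (fun z => df_le _ _ z A) AA ha)
               (eq_ind_r (fun z => df_le _ _ z A) AA hb)))))
    A (conj I (conj (fun a ha => eq_ind_r (fun z => df_le _ _ z A) AA ha)
        (fun u _ hu => hu A erefl))) AA.
  exact: lc.
move=> U _ hU; apply/leE; apply: lub; first exact: dn.
move=> psi [Gpsi wbpsi].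
have dpsi : d psi = top := GP _ _ Gpsi.
have nB := nq_top psi dpsi.
set B := qcls disp D Phi d comb e psi in nB.
rewrite -nB; apply/leE; apply: hU; split; first by rewrite nB.
move=> X _ HD S [_ [HSub HSlub]] hAS.
have HY : forall a, (exists C, X C /\ a = n C) -> Phi_at disp D Phi d top a.
  by move=> _ [C [_ ->]]; exact: dn.
have Hsup : is_sup_in Phi (Phi_at disp D Phi d top) (info_le Phi comb)
    (fun t => exists C, X C /\ t = n C) (n S).
  split; first exact: dn.
  split; first by move=> _ [C [XC ->]]; apply/leE; apply: HSub.
  move=> u du hu.
  have : df_le _ (qcomb disp D Phi d comb e) S (qcls disp D Phi d comb e u).
    apply: HSlub => // C XC; apply/leE; rewrite nq_top //.
    by apply: hu; exists C.
  by move/leE; rewrite nq_top.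
have hle : info_le Phi comb t (n S) by move/leE: hAS.
have [c [[C [XC ->]] lc]] := wbpsi _ HY (dirY X HD) (n S) Hsup hle.
by exists C; split => //; apply/leE; rewrite nB.
Qed.
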